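(* Perform a round-robin tournament on the $n$ elements $x_1,\dots,x_n$ (every pair is compared exactly once), and list the elements in increasing order of their number of wins, breaking ties arbitrarily. Then the resulting list is $2$-sorted: whenever $y$ is listed before $x$ we have $x \ge y - 2$ (equivalently, if $y < x-2$ then $y$ is listed before $x$).
   Context: Model of imprecise comparisons: there are $n$ elements $x_1,\dots,x_n$, each with a fixed unknown real value; we identify an element with its value. An algorithm accesses the elements only through a comparator: asked to compare $x_i$ and $x_j$, it answers either ''$x_i \ge x_j$'' (we say $x_i$ defeats $x_j$, or $x_j$ loses to $x_i$) or ''$x_j \ge x_i$''. If $|x_i-x_j|>1$ the answer is correct; if $|x_i-x_j|\le 1$ the answer is arbitrary (possibly chosen adversarially and adaptively, and possibly different on repeated queries). A round-robin tournament on a set compares every pair of its elements once; the number of wins of an element is the number of elements it defeats. A list $x_{\pi(1)},\dots,x_{\pi(n)}$ is $k$-sorted if $x_{\pi(i)} \ge x_{\pi(j)} - k$ for all $i>j$. *)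

(* Defs.v *)
From mathcomp Require Import all_boot all_order all_fingroup all_algebra.
Set Implicit Arguments. Unset Strict Implicit. Unset Printing Implicit Defensive.
Import Order.TTheory GRing.Theory Num.Theory.
Local Open Scope ring_scope.

(* A round-robin tournament outcome is a relation [beats] : beats i j means
   "the comparator answered x_i >= x_j", i.e. x_i defeats x_j. *)

Definition round_robin (n : nat) (beats : rel 'I_n) : Prop :=
  forall i j : 'I_n, i != j -> beats i j = ~~ beats j i.

Definition imprecise_consistent (R : realFieldType) (n : nat)
  (x : 'I_n -> R) (beats : rel 'I_n) : Prop :=
  forall i j : 'I_n, i != j -> 1 < `|x i - x j| -> beats i j = (x j <= x i).

Definition wins (n : nat) (beats : rel 'I_n) (i : 'I_n) : nat :=
  #|[set j : 'I_n | (j != i) && beats i j]|.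

(* The list x_{pi(0)}, ..., x_{pi(n-1)} is k-sorted. *)
Definition k_sorted (R : realFieldType) (n : nat) (x : 'I_n -> R)
  (pi : {perm 'I_n}) (k : R) : Prop :=
  forall a b : 'I_n, (b < a)%N -> x (pi b) - k <= x (pi a).

(* Main.v *)
Require Import Defs.
From mathcomp Require Import all_boot all_order all_fingroup all_algebra.
From mathcomp Require Import lra.
Import Order.TTheory GRing.Theory Num.Theory.
Local Open Scope ring_scope.

Theorem mainTheorem1 (R : realFieldType) (n : nat) (x : 'I_n -> R)
  (beats : rel 'I_n) (pi : {perm 'I_n}) :
  round_robin beats ->
  imprecise_consistent x beats ->
  (forall a b : 'I_n, (a <= b)%N -> (wins beats (pi a) <= wins beats (pi b))%N) ->
  k_sorted x pi 2.
Proof.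
move=> _ Hc Hw a b ltba.
set u := pi a; set v := pi b.
rewrite leNgt; apply/negP => Hlt.
have Hwb := Hw b a (ltnW ltba).
have key : forall j, x j <= x u + 1 -> (j != v) && beats v j.
  move=> j Hj.
  have Hjv : x j < x v - 1 by lra.
  have njv : j != v by apply/eqP => E; move: Hjv; rewrite E => H; lra.
  rewrite njv /= (Hc v j) ?(eq_sym v) //.
    by apply: ltW; lra.
  have H1 : 1 < x v - x j by lra.
  by apply: (lt_le_trans H1 (ler_norm _)).
have sub : [set j | (j != u) && beats u j] \proper [set j | (j != v) && beats v j].
  apply/properP; split.
    apply/subsetP => j; rewrite !inE => /andP [nju bj]; apply: key.
    case: (lerP `|x u - x j| 1) => Hd.
      by move: Hd => /ler_normlP [H1 H2]; lra.
    rewrite (Hc u j) // in bj; last by rewrite eq_sym.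
    by lra.
  exists u; last by rewrite inE eqxx.
  rewrite inE; apply: key; lra.
move: (proper_card sub); rewrite /wins -/u -/v in Hwb.
by rewrite ltnNge Hwb.
Qed.
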